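(* Let $X$ and $Y$ be topological spaces, let $f: X \to X$ and $g: Y \to Y$ be maps, and let $\Phi: X \to \mathbb{R}^n$ and $\Psi: Y \to \mathbb{R}^n$ be probe functions. Suppose $h: X \to Y$ is continuous and surjective with $h \circ f = g \circ h$, and that $h$ is descriptively continuous. If $f$ is descriptively transitive with respect to $\Phi$, then $g$ is descriptively transitive with respect to $\Psi$.
   Context: A probe function is an arbitrary function into $\mathbb{R}^n$; for $A \subseteq X$ write $\Phi(A) = \{\Phi(a) : a \in A\}$. Subsets $A, B \subseteq X$ are descriptively near, written $A \,\delta_{\Phi}\, B$, if $\Phi(A) \cap \Phi(B) \neq \emptyset$ (similarly $\delta_{\Psi}$ on $Y$). The map $h$ is descriptively continuous if $A \,\delta_{\Phi}\, B$ implies $h(A) \,\delta_{\Psi}\, h(B)$ for all $A, B \subseteq X$. The descriptive intersection is $A \cap_{\Phi} B = \{x \in A \cup B : \Phi(x) \in \Phi(A) \cap \Phi(B)\}$. A map $f$ is descriptively transitive with respect to $\Phi$ if for all nonempty open $U, V \subseteq X$ there is an integer $k > 0$ with $f^k(U) \cap_{\Phi} V \neq \emptyset$ (analogously for $g$ and $\Psi$ on $Y$). *)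

(* Defs.v *)
From HB Require Import structures.
From mathcomp Require Import all_boot all_order all_algebra.
From mathcomp Require Import all_classical all_reals topology.
Set Implicit Arguments. Unset Strict Implicit. Unset Printing Implicit Defensive.
Import Order.TTheory GRing.Theory Num.Theory.
Local Open Scope classical_set_scope.

Definition desc_near (T : Type) (R : realType) (n : nat)
  (Phi : T -> 'rV[R]_n) (A B : set T) : Prop :=
  (Phi @` A) `&` (Phi @` B) !=set0.

Definition desc_continuous (T U : Type) (R : realType) (n : nat)
  (Phi : T -> 'rV[R]_n) (Psi : U -> 'rV[R]_n) (h : T -> U) : Prop :=
  forall A B : set T, desc_near Phi A B -> desc_near Psi (h @` A) (h @` B).

Definition desc_inter (T : Type) (R : realType) (n : nat)
  (Phi : T -> 'rV[R]_n) (A B : set T) : set T :=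
  [set x | (A `|` B) x /\ ((Phi @` A) `&` (Phi @` B)) (Phi x)].

Definition desc_transitive (T : topologicalType) (R : realType) (n : nat)
  (Phi : T -> 'rV[R]_n) (f : T -> T) : Prop :=
  forall U V : set T, open U -> open V -> U !=set0 -> V !=set0 ->
    exists k : nat, (0 < k)%N /\ desc_inter Phi (iter k f @` U) V !=set0.

(* Main.v *)
Require Import Defs.
From HB Require Import structures.
From mathcomp Require Import all_boot all_order all_algebra.
From mathcomp Require Import all_classical all_reals topology.
Local Open Scope classical_set_scope.

Theorem lemma3 (R : realType) (n : nat) (X Y : topologicalType)
  (f : X -> X) (g : Y -> Y) (Phi : X -> 'rV[R]_n) (Psi : Y -> 'rV[R]_n)
  (h : X -> Y) :
  continuous h ->
  (forall y : Y, exists x : X, h x = y) ->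
  h \o f = g \o h ->
  desc_continuous Phi Psi h ->
  desc_transitive Phi f ->
  desc_transitive Psi g.
Proof.
move=> hc hs hfg hd ft U V oU oV [u Uu] [v Vv].
have hit : forall k x, h (iter k f x) = iter k g (h x).
  elim=> [//|k IH] x /=.
  by rewrite -IH; exact: (congr1 (fun F => F (iter k f x)) hfg).
have oU' : open (h @^-1` U) by move/continuousP: hc; apply.
have oV' : open (h @^-1` V) by move/continuousP: hc; apply.
have [xu hxu] := hs u; have [xv hxv] := hs v.
have [||k [k0 [x [_ [[a Aa ea] [b Bb eb]]]]]] := ft _ _ oU' oV'.
- by exists xu; rewrite /preimage /= hxu.
- by exists xv; rewrite /preimage /= hxv.
exists k; split => //.
have [z [[y1 [a1 Aa1 ha1] e1] [y2 [b1 Bb1 hb1] e2]]] :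
  desc_near Psi (h @` (iter k f @` (h @^-1` U))) (h @` (h @^-1` V)).
  apply: hd; exists (Phi x); split; [exists a|exists b] => //.
subst y1 y2; case: Aa1 => w Uw ew; subst a1.
rewrite hit in e1.
exists (iter k g (h w)); split.
  by left; exists (h w).
split.
  by exists (iter k g (h w)) => //; exists (h w).
exists (h b1); [exact: Bb1 | by rewrite e1 e2].
Qed.
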